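(* Let $t,k,n$ be positive integers with $t\le k\le n$ and $n\ge (t+1)(k-t+1)$. Let $\mathcal F=\{F\in\binom{[n]}{k}:[t]\subseteq F\}$ and $\mathcal G=\mathcal A(n,k,t)=\{G\in\binom{[n]}{k}: |G\cap[t+2]|\ge t+1\}$. Then ${\rm co}_2(\mathcal G)\le{\rm co}_2(\mathcal F)$, and equality holds only if $k=t+1$ and $n=2t+2$; in this case $\mathcal F\cong\mathcal G^c=\{[n]\setminus G: G\in\mathcal G\}$.
   Context: For $\mathcal H\subseteq\binom{[n]}{k}$ and $E\subseteq[n]$, $d(E)=|\{H\in\mathcal H:E\subseteq H\}|$, and ${\rm co}_2(\mathcal H)=\sum_{E\in\binom{[n]}{k-1}}d(E)^2$. $\cong$ means equality up to a permutation of $[n]$. *)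

(* Defs.v *)
(* Ground set [n] = {1..n} is modelled as 'I_n = {0..n-1};
   [m] (m <= n) corresponds to {i : 'I_n | val i < m}. *)
From mathcomp Require Import all_boot.
From mathcomp Require Import fingroup perm.
Set Implicit Arguments. Unset Strict Implicit. Unset Printing Implicit Defensive.

Definition initseg (n m : nat) : {set 'I_n} := [set i : 'I_n | val i < m].

Definition deg (n : nat) (H : {set {set 'I_n}}) (E : {set 'I_n}) : nat :=
  #|[set A in H | E \subset A]|.

Definition co2 (n k : nat) (H : {set {set 'I_n}}) : nat :=
  \sum_(E : {set 'I_n} | #|E| == k.-1) (deg H E) ^ 2.

Definition starFam (n k t : nat) : {set {set 'I_n}} :=
  [set F : {set 'I_n} | (#|F| == k) && (initseg n t \subset F)].

Definition AFam (n k t : nat) : {set {set 'I_n}} :=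
  [set G : {set 'I_n} | (#|G| == k) && (t.+1 <= #|G :&: initseg n t.+2|)].

Definition complFam (n : nat) (H : {set {set 'I_n}}) : {set {set 'I_n}} :=
  [set ~: A | A in H].

Definition famIso (n : nat) (H1 H2 : {set {set 'I_n}}) : Prop :=
  exists s : {perm 'I_n}, [set (s : {perm 'I_n}) @: (A : {set 'I_n}) | A in H1] = H2.

(* Main.v *)
Require Import Defs.
From mathcomp Require Import all_boot fingroup perm zify.
Set Implicit Arguments. Unset Strict Implicit. Unset Printing Implicit Defensive.

Lemma card_initseg n m : m <= n -> #|initseg n m| = m.
Proof.
move=> mn.
have -> : initseg n m = [set widen_ord mn j | j in [set: 'I_m]].
  apply/setP=> i; rewrite !inE; apply/idP/imsetP.
    move=> im; exists (Ordinal im); first by rewrite inE.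
    by apply/val_inj.
  by case=> j _ ->; rewrite /= ltn_ord.
rewrite card_imset ?cardsT ?card_ord //.
by move=> a b /(congr1 val) /= /val_inj.
Qed.

Definition famr n k (S : {set 'I_n}) r : {set {set 'I_n}} :=
  [set A : {set 'I_n} | (#|A| == k) && (r <= #|A :&: S|)].

Lemma cardU1I n (E S : {set 'I_n}) x : x \notin E ->
  #|(x |: E) :&: S| = (x \in S) + #|E :&: S|.
Proof.
move=> xE; rewrite setIUl.
case xS: (x \in S).
  have -> : [set x] :&: S = [set x].
    by apply/setP=> y; rewrite !inE; case: eqP => // ->.
  by rewrite cardsU1 inE (negbTE xE).
have -> : [set x] :&: S = set0.
  by apply/setP=> y; rewrite !inE; case: eqP => // ->; rewrite xS.
by rewrite set0U.
Qed.

Definition hval n m (s r a : nat) :=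
  if r <= a then n - m else if r == a.+1 then s - a else 0.

Lemma deg_famr n k (S : {set 'I_n}) r (E : {set 'I_n}) :
  0 < k -> #|E| = k.-1 ->
  deg (famr k S r) E = hval n k.-1 #|S| r #|E :&: S|.
Proof.
move=> k0 cE.
set X := [set x | (x \notin E) && (r <= (x \in S) + #|E :&: S|)].
rewrite /deg.
have -> : [set A in famr k S r | E \subset A] = [set x |: E | x in X].
  apply/setP=> A; rewrite !inE; apply/idP/imsetP.
    case/andP=> /andP[/eqP cA rA] EA.
    have : #|A :\: E| == 1.
      by rewrite cardsD (setIidPr EA) cA cE; apply/eqP; lia.
    case/cards1P=> x Ax.
    have xA : x \in A :\: E by rewrite Ax inE.
    move: (xA); rewrite inE => /andP[xE _].
    have AE : A = x |: E.
      rewrite -Ax; apply/setP=> y; rewrite !inE.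
      case yE: (y \in E); rewrite /= ?orbT ?orbF ?andbT //.
      exact: (subsetP EA).
    exists x => //; rewrite inE xE /= -cardU1I // -AE //.
  case=> x; rewrite inE => /andP[xE rx] ->.
  rewrite cardsU1 xE cE cardU1I // rx subsetUr andbT /= andbT.
  by rewrite add1n prednK.
rewrite card_in_imset; last first.
  move=> x y; rewrite !inE => /andP[xE _] /andP[yE _] exy.
  have : x \in y |: E by rewrite -exy setU11.
  rewrite !inE (negbTE xE) orbF. move/eqP. done.
rewrite /hval; case: ifP => ra.
  have -> : X = ~: E.
    apply/setP=> x; rewrite !inE; case: (x \in E); rewrite /=; [by []|]. case: (x \in S); rewrite /= ?add1n ?add0n; [exact: leq_trans ra (leqnSn _)|exact: ra].
  by rewrite cardsCs setCK card_ord cE.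
case: ifP => ra1.
  have -> : X = S :\: E.
    apply/setP=> x; rewrite !inE; case: (x \notin E) => //=.
    move/eqP: ra1 => ->; case: (x \in S) => /=.
      by rewrite add1n leqnn.
    by rewrite add0n ltnn.
  by rewrite cardsD setIC.
have h : #|E :&: S|.+1 < r.
  by rewrite ltn_neqAle eq_sym ra1 /= ltnNge ra.
apply/eqP; rewrite cards_eq0; apply/eqP/setP => x; rewrite !inE.
case: (x \in S) => /=; rewrite ?andbF //.
  by rewrite add1n leqNgt h andbF.
by rewrite add0n leqNgt (ltnW h) andbF.
Qed.

Definition cnt n m (S : {set 'I_n}) a :=
  #|[set E : {set 'I_n} | (#|E| == m) && (#|E :&: S| == a)]|.

Lemma co2_famr n k (S : {set 'I_n}) r : 0 < k ->
  co2 k (famr k S r) =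
  \sum_(a < #|S|.+1) (hval n k.-1 #|S| r a)^2 * cnt k.-1 S a.
Proof.
move=> k0; rewrite /co2.
under eq_bigr => E /eqP cE do rewrite deg_famr //.
rewrite (partition_big (fun E : {set 'I_n} => (inord #|E :&: S| : 'I_#|S|.+1)) predT) //=.
apply: eq_bigr => a _.
have ES : forall E : {set 'I_n}, #|E :&: S| < #|S|.+1.
  by move=> E; rewrite ltnS subset_leq_card // subsetIr.
rewrite (eq_bigl (fun E : {set 'I_n} => E \in [set E : {set 'I_n} | (#|E| == k.-1) && (#|E :&: S| == a)])); last first.
  move=> E; rewrite inE; congr (_ && _).
  by rewrite -(inj_eq val_inj) /= inordK.
rewrite (eq_bigr (fun _ => (hval n k.-1 #|S| r a)^2)); last first.
  by move=> E; rewrite inE => /andP[_ /eqP ->].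
by rewrite sum_nat_const mulnC.
Qed.

Lemma cnt_val n m (S : {set 'I_n}) a : a <= m ->
  cnt m S a = 'C(#|S|, a) * 'C(n - #|S|, m - a).
Proof.
move=> am.
pose DP := [set P : {set 'I_n} | P \subset S & #|P| == a].
pose DQ := [set Q : {set 'I_n} | Q \subset ~: S & #|Q| == m - a].
have key : forall P Q : {set 'I_n}, P \subset S -> Q \subset ~: S ->
    (P :|: Q) :&: S = P /\ (P :|: Q) :&: ~: S = Q.
  move=> P Q PS QS; split; apply/setP=> x; rewrite !inE.
    case xP: (x \in P); first by rewrite (subsetP PS).
    by case xQ: (x \in Q) => //=; move: (subsetP QS x xQ); rewrite inE => /negbTE ->.
  case xQ: (x \in Q).
    by rewrite orbT /=; move: (subsetP QS x xQ); rewrite inE.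
  rewrite orbF; case xP: (x \in P) => //=; by rewrite (subsetP PS).
rewrite /cnt.
have -> : [set E : {set 'I_n} | (#|E| == m) && (#|E :&: S| == a)] =
          [set pq.1 :|: pq.2 | pq in setX DP DQ].
  apply/setP=> E; rewrite inE; apply/idP/imsetP.
    case/andP=> /eqP cE /eqP cES.
    exists (E :&: S, E :&: ~: S).
      rewrite !inE /= !subsetIr cES eqxx /=.
      have := cardsID S E; rewrite setDE cES cE => <-.
      by rewrite addKn.
    by rewrite /= -setIUr setUCr setIT.
  case=> [[P Q]]; rewrite !inE /= => /andP[/andP[PS /eqP cP] /andP[QS /eqP cQ]] ->.
  have [k1 k2] := key P Q PS QS.
  rewrite k1 cP eqxx andbT cardsU cP cQ.
  have -> : P :&: Q = set0.
    apply/setP=> x; rewrite !inE; case xP: (x \in P) => //=.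
    by apply/negbTE; move: (subsetP PS x xP); apply: contraL => /(subsetP QS); rewrite inE.
  by rewrite cards0 subn0 subnKC.
rewrite card_in_imset; last first.
  move=> [P Q] [P' Q']; rewrite !inE /= => /andP[/andP[PS _] /andP[QS _]] /andP[/andP[PS' _] /andP[QS' _]] e.
  have [k1 k2] := key P Q PS QS; have [k1' k2'] := key P' Q' PS' QS'.
  have eP : P = P' by rewrite -k1 e k1'.
  have eQ : Q = Q' by rewrite -k2 e k2'.
  by rewrite eP eQ.
rewrite cardsX !cards_draws; congr (_ * _).
have h := cardsC S; rewrite card_ord in h.
have -> : n - #|S| = #|~: S| by move: h; clear; lia.
done.
Qed.

Lemma cnt_big n m (S : {set 'I_n}) a : m < a -> cnt m S a = 0.
Proof.
move=> ma; apply/eqP; rewrite cards_eq0; apply/eqP/setP=> E; rewrite !inE.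
apply/negbTE; apply/negP=> /andP[/eqP cE /eqP cES].
have : #|E :&: S| <= #|E| by rewrite subset_leq_card // subsetIl.
by rewrite cES cE leqNgt ma.
Qed.

Lemma starFam_famr n k t : t <= n -> starFam n k t = famr k (initseg n t) t.
Proof.
move=> tn; apply/setP=> A; rewrite !inE; congr (_ && _).
apply/idP/idP => [sub|h].
  by rewrite (setIidPr sub) card_initseg.
have e : A :&: initseg n t = initseg n t.
  apply/eqP; rewrite eqEcard subsetIr card_initseg //.
rewrite -e; exact: subsetIl.
Qed.

Lemma co2F n k t : 0 < t -> t <= k -> k <= n ->
  co2 k (starFam n k t) = t * 'C(n - t, k - t) + (n - k.-1)^2 * cnt k.-1 (initseg n t) t.
Proof.
move=> t0 tk kn.
have tn : t <= n by apply: leq_trans tk kn.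
rewrite starFam_famr // co2_famr ?card_initseg //; last by apply: leq_trans t0 tk.
case: t t0 tk tn => // u _ tk tn.
rewrite !big_ord_recr /= big1 ?add0n; last first.
  move=> a _; rewrite /hval /=.
  have : a < u by [].
  move=> au; rewrite leqNgt ltnS (ltnW au) /=.
  by rewrite eqSS gtn_eqF.
rewrite /hval ltnn eqxx leqnn subSnn exp1n mul1n.
rewrite cnt_val; last by case: k tk {kn} => //= k' ; rewrite ltnS.
rewrite card_initseg // binSn; congr (_ * 'C(_, _) + _).
case: k tk {kn} => //= k'; lia.
Qed.

Lemma co2G0 n t : 0 < t -> co2 t (AFam n t t) = 0.
Proof.
move=> t0.
have -> : AFam n t t = famr t (initseg n t.+2) t.+1 by [].
rewrite co2_famr // big1 // => a _.
case: (leqP a t.-1) => ha.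
  rewrite /hval.
  have -> : (t.+1 <= a) = false by apply/negbTE; rewrite -ltnNge; lia.
  have -> : (t.+1 == a.+1) = false by apply/negbTE; lia.
  by [].
by rewrite cnt_big // muln0.
Qed.

Lemma co2G n k t : 0 < t -> t < k -> t.+2 <= n ->
  co2 k (AFam n k t) = 4 * 'C(t.+2, t) * 'C(n - t.+2, k.-1 - t) +
     (n - k.-1)^2 * (cnt k.-1 (initseg n t.+2) t.+1 + cnt k.-1 (initseg n t.+2) t.+2).
Proof.
move=> t0 tk tn.
have -> : AFam n k t = famr k (initseg n t.+2) t.+1 by [].
rewrite co2_famr ?card_initseg //; last by lia.
rewrite !big_ord_recr /= big1 ?add0n; last first.
  move=> a _; rewrite /hval /=.
  have au := ltn_ord a.
  by rewrite ltnNge (ltnW au) /= eqSS gtn_eqF.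
rewrite /hval ltnn eqxx leqnn (ltnW (ltnSn t.+1)).
rewrite cnt_val; last by lia.
rewrite card_initseg //.
have -> : t.+2 - t = 2 by lia.
rewrite mulnDr addnA; congr (_ + _ + _).
by rewrite mulnA.
Qed.
Lemma transport (T : finType) (s : {perm T}) (T0 U : {set T}) (k : nat) :
  s @: T0 = U ->
  [set (s : {perm T}) @: (A : {set T}) | A in [set A : {set T} | (#|A| == k) && (T0 \subset A)]] =
  [set B : {set T} | (#|B| == k) && (U \subset B)].
Proof.
move=> sT; apply/setP=> B; apply/imsetP/idP.
  case=> A; rewrite inE => /andP[cA TA] ->.
  rewrite inE card_imset ?cA /=; last exact: perm_inj.
  by rewrite -sT; apply: imsetS.
rewrite inE => /andP[cB UB].
exists ((s^-1)%g @: B).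
  rewrite inE card_imset ?cB /=; last exact: perm_inj.
  apply/subsetP=> x xT; apply/imsetP; exists (s x).
    by apply: (subsetP UB); rewrite -sT; apply: imset_f.
  by rewrite permK.
apply/setP=> y; apply/idP/imsetP.
  by move=> yB; exists ((s^-1)%g y); [apply: imset_f|rewrite permKV].
by case=> x /imsetP[z zB ->] ->; rewrite permKV.
Qed.

Lemma compl_eq t : 0 < t ->
  complFam (AFam (2 * t + 2) t.+1 t) =
  [set B : {set 'I_(2 * t + 2)} | (#|B| == t.+1) && (~: initseg (2 * t + 2) t.+2 \subset B)].
Proof.
move=> t0.
set n := 2 * t + 2.
have cS : #|initseg n t.+2| = t.+2 by rewrite card_initseg /n; lia.
apply/setP=> B; apply/imsetP/idP.
  case=> A; rewrite inE => /andP[/eqP cA hA] ->.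
  have AS : A :&: initseg n t.+2 = A.
    by apply/eqP; rewrite eqEcard subsetIl cA hA.
  have := cardsC A; rewrite card_ord cA /n => h.
  rewrite inE; apply/andP; split; first by apply/eqP; lia.
  by rewrite setCS -AS subsetIr.
rewrite inE => /andP[/eqP cB UB].
exists (~: B); last by rewrite setCK.
rewrite inE.
have := cardsC B; rewrite card_ord cB /n => h.
have c2 : #|~: B| = t.+1.
  by apply/eqP; rewrite -(eqn_add2l t.+1) h; apply/eqP; lia.
have AS : ~: B :&: initseg n t.+2 = ~: B.
  by apply/setIidPl; rewrite -setCS setCK.
by rewrite AS c2 eqxx leqnn.
Qed.

Definition gf t (i : nat) := if i < t then i + t.+2 else if t.+2 <= i then i - t.+2 else i.

Lemma gf_lt t i : i < 2 * t + 2 -> gf t i < 2 * t + 2.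
Proof. rewrite /gf; case: ifP => h1; [lia|]; case: ifP => h2; lia. Qed.

Lemma gfK t i : i < 2 * t + 2 -> gf t (gf t i) = i.
Proof. rewrite /gf; case: (ltnP i t) => h1; case: (leqP t.+2 i) => h2;
  repeat (case: ifP => ?); lia. Qed.

Lemma iso_case t : 0 < t ->
  famIso (starFam (2 * t + 2) t.+1 t) (complFam (AFam (2 * t + 2) t.+1 t)).
Proof.
move=> t0.
set n := 2 * t + 2.
pose sig := fun i : 'I_n => insubd i (gf t i) : 'I_n.
have sv : forall i : 'I_n, val (sig i) = gf t i.
  by move=> i; rewrite /sig val_insubd gf_lt.
have sinj : injective sig.
  move=> a b e; apply/val_inj.
  have := congr1 (fun x : 'I_n => gf t (val x)) e.
  by rewrite /= !sv !gfK.
exists (perm sinj).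
rewrite compl_eq //; apply: transport.
apply/eqP; rewrite eqEcard; apply/andP; split.
  apply/subsetP=> y /imsetP[x xT ->]; rewrite permE !inE -leqNgt sv.
  move: xT; rewrite inE /gf => ->; lia.
rewrite card_imset; last exact: perm_inj.
rewrite card_initseg /n; last by lia.
have := cardsC (initseg n t.+2); rewrite card_initseg /n; last by lia.
rewrite card_ord => h; lia.
Qed.
Lemma bin2tw m : 'C(m.+2, m) * 2 = m.+2 * m.+1.
Proof.
elim: m => [|m IH]; first by [].
rewrite binS binSn mulnDl IH; lia.
Qed.

Lemma P t i L : 0 < t -> t * (i + 3) + 1 <= L ->
  2 * (t+1) * (t+2) * L + (L+1)^2 * t * (i+2) < 2 * t * L + (L+1)^2 * L.
Proof.
move=> t0 hL.
have [e ->] : exists e, L = t * (i+3) + 1 + e by exists (L - (t * (i + 3) + 1)); lia.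
nia.
Qed.



Unset Implicit Arguments.
Theorem lemma4p4 (t k n : nat) :
  0 < t -> t <= k -> k <= n -> t.+1 * (k - t).+1 <= n ->
  co2 k (AFam n k t) <= co2 k (starFam n k t) /\
  (co2 k (AFam n k t) = co2 k (starFam n k t) ->
     [/\ k = t.+1, n = (2 * t + 2)%N &
         famIso (starFam n k t) (complFam (AFam n k t))]).
Proof.
move=> t0 tk kn hn.
have tn : t <= n by lia.
rewrite co2F //.
have [j ek] : exists j, k = t + j by exists (k - t); lia.
subst k.
have tt0 : t + j - t = j by lia.
rewrite tt0 in hn *.
case: j tk kn hn tt0 => [|[|[|i]]] tk kn hn _.
- rewrite addn0 co2G0 // bin0 muln1; split => // h; exfalso; lia.
- rewrite co2G //; [|lia..].
  rewrite addn1 /= (@cnt_val n t (initseg n t) t) // !cnt_big; last 2 first.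
    by []. by [].
  rewrite card_initseg // subnn binn bin0 bin1 !muln1 ?mul1n ?muln0 ?addn0.
  have h2 := bin2tw t.
  rewrite bin0 muln1.
  split; first by nia.
  move=> e.
  have en : n = 2 * t + 2 by nia.
  split => //; subst n; exact: iso_case.
- rewrite co2G //; [|lia..].
  have -> : (t + 2).-1 = t.+1 by lia.
  rewrite (@cnt_val n t.+1 (initseg n t) t) // (@cnt_val n t.+1 (initseg n t.+2) t.+1) //.
  rewrite (@cnt_big n t.+1 (initseg n t.+2) t.+2) // !card_initseg //; try lia.
  rewrite binn binSn subnn bin0 subSnn bin1 !mul1n muln1 addn0.
  have h2 := bin2tw t.
  have h3 := mul_bin_diag (n - t) 1; rewrite bin1 in h3.
  rewrite bin1.
  have [m em] : exists m, n = t + m.+3 by exists (n - t - 3); lia.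
  have e1 : n - t.+2 = m.+1 by lia.
  have e2 : n - t.+1 = m.+2 by lia.
  have e3 : n - t = m.+3 by lia.
  rewrite e1 e2 e3 in h3 *.
  have hm : 2 * t <= m by lia.
  suff lt : 4 * 'C(t.+2, t) * m.+1 + m.+2 ^ 2 * t.+2 < t * 'C(m.+3, 2) + m.+2 ^ 2 * m.+3.
    split; first exact: ltnW.
    by move=> e; exfalso; rewrite e ltnn in lt.
  rewrite -(ltn_pmul2r (_ : 0 < 2)) //.
  move: h2 h3; generalize ('C(t.+2, t)) ('C(m.+3, 2)) => c1 c2 h2 h3.
  clear -hm t0 h2 h3; nia.
- rewrite co2G //; try lia.
  have -> : (t + i.+3).-1 = t + i.+2 by lia.
  rewrite (@cnt_val n (t + i.+2) (initseg n t) t); last by lia.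
  rewrite (@cnt_val n (t + i.+2) (initseg n t.+2) t.+1); last by lia.
  rewrite (@cnt_val n (t + i.+2) (initseg n t.+2) t.+2); last by lia.
  rewrite !card_initseg; try lia.
  rewrite binn binSn !mul1n.
  have [L eL] : exists L, n = t + i + L + 3 by exists (n - t - i - 3); lia.
  have hL : t * (i + 3) + 1 <= L by nia.
  have e1 : n - t.+2 = (i + L).+1 by lia.
  have e2 : n - (t + i.+2) = L.+1 by lia.
  have e3 : n - t = (i + L).+3 by lia.
  have e4 : t + i.+2 - t = i.+2 by lia.
  have e5 : t + i.+2 - t.+1 = i.+1 by lia.
  have e6 : t + i.+2 - t.+2 = i by lia.
  have e7 : t + i.+2 - t = i.+2 by lia.
  rewrite e1 e2 e3 e4 e5 e6.
  set N := (i + L).+1.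
  have h2 := bin2tw t.
  have hx := mul_bin_left N i.+1.
  have eNL : N - i.+1 = L by rewrite /N; lia.
  rewrite eNL in hx.
  have hw : 'C(N.+2, i.+2) = 'C(N, i.+2) + 2 * 'C(N, i.+1) + 'C(N, i).
    rewrite !binS; lia.
  have hy : 2 * 'C(N, i.+2) <= 'C(N.+2, i.+3).
    rewrite !binS; lia.
  have hc : 0 < 'C(N, i.+1) by rewrite bin_gt0 /N; lia.
  have hP := P t0 hL.
  rewrite hw.
  move: hx hy hc hP h2.
  generalize ('C(N, i.+2)) ('C(N, i.+1)) ('C(N, i)) ('C(N.+2, i.+3)) ('C(t.+2, t)).
  move=> x c z y c1 hx hy hc hP h2.
  have hP2 : (2 * (t + 1) * (t + 2) * L + (L + 1) ^ 2 * t * (i + 2)) * c <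
             (2 * t * L + (L + 1) ^ 2 * L) * c by rewrite ltn_pmul2r.
  have hP3 : (i+2) * (2 * (t + 1) * (t + 2) * x + (L + 1) ^ 2 * t * c) <
             (i+2) * (2 * t * x + (L + 1) ^ 2 * x).
    have hx' : (i + 2) * x = L * c by rewrite -hx; congr (_ * _); lia.
    have q : 2*(t+1)*(t+2)*((i+2)*x) + (i+2)*((L+1)^2*t*c) < 2*t*((i+2)*x) + (L+1)^2*((i+2)*x).
      rewrite hx'; move: hP2; clear; lia.
    move: q; clear; lia.
  rewrite ltn_pmul2l in hP3; last by rewrite addn2.
  have lt : 4 * c1 * x + (L.+1) ^ 2 * (t.+2 * c + z) <
            t * y + (L.+1) ^ 2 * (x + 2 * c + z).
    move: hP3; set d := (L + 1) ^ 2; have -> : L.+1 ^ 2 = d by rewrite /d addn1.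
    move: d => d hP3.
    have e4c : 4 * c1 * x = 2 * (t + 1) * (t + 2) * x .
      have -> : 4 * c1 * x = 2 * (c1 * 2) * x by clear; lia.
      rewrite h2; clear; lia.
    have hy' : t * (2 * x) <= t * y by rewrite leq_mul2l hy orbT.
    move: e4c hP3 hy'; clear; lia.
  rewrite binn mul1n; split; first exact: ltnW.
  by move=> e; exfalso; rewrite e ltnn in lt.
Qed.
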